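(* Let $r\ge1$ and $z\in\mathbb{C}$, $z\ne0$. The algebra $\mathcal{P}'_r(z)$ is isomorphic to the algebra generated by elements $s_1,\dots,s_{r-1},p_1,\dots,p_r$ subject to the relations (a) $p_j^2=zp_j$, and $p_ip_j=p_jp_i$ for $i\ne j$; (b) $s_i^2=1$, $s_is_{i+1}s_i=s_{i+1}s_is_{i+1}$, and $s_is_j=s_js_i$ if $|i-j|>1$; (c) $s_ip_ip_{i+1}=p_ip_{i+1}s_i=p_ip_{i+1}$, $s_ip_is_i=p_{i+1}$, and $s_ip_j=p_js_i$ if $j\ne i,i+1$; the isomorphism sending $s_i$ to the permutation swapping $i$ and $i+1$, and $p_j$ to the identity map of $\{1,\dots,r\}\setminus\{j\}$.
   Context: A partial permutation of $\{1,\dots,r\}$ is a bijection $d:X\to Y$ between subsets $X=\mathrm{dom}(d)$, $Y=\mathrm{im}(d)$ of $\{1,\dots,r\}$; maps are written on the right and composed by $x(d_1\circ d_2)=(xd_1)d_2$. The algebra $\mathcal{P}'_r(z)$ has basis the set of partial permutations of $\{1,\dots,r\}$ and product $d_1d_2=z^{N}(d_1\circ d_2)$ where $N=r-|\mathrm{im}(d_1)\cup\mathrm{dom}(d_2)|$; equivalently, it is the subalgebra of the partition algebra $\mathcal{P}_r(z)$ spanned by the set-partition diagrams of $\{1,\dots,r,1',\dots,r'\}$ whose blocks have size $1$ or $2$, every $2$-block containing one element of $\{1,\dots,r\}$ and one of $\{1',\dots,r'\}$ (the block $\{i,j'\}$ corresponding to $i\mapsto j$). *)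

(* Defs.v *)
From HB Require Import structures.
From mathcomp Require Import all_boot all_order all_algebra.
From mathcomp Require Import complex.
From mathcomp Require Import reals.
Set Implicit Arguments. Unset Strict Implicit. Unset Printing Implicit Defensive.
Import Order.TTheory GRing.Theory Num.Theory.
Local Open Scope ring_scope.

(* The set {1,...,r} is represented 0-based by 'I_r (element k <-> k+1).
   A partial map of 'I_r is a finite function 'I_r -> option 'I_r
   (None = undefined); a partial permutation is an injective one. *)
Definition pmap r := {ffun 'I_r -> option 'I_r}.

Definition pinj r (f : pmap r) : bool :=
  [forall x, forall y, (f x != None) ==> (f x == f y) ==> (x == y)].

Definition pperm r := {f : pmap r | pinj f}.

(* composition written on the right: x (d1 o d2) = (x d1) d2 *)
Definition pcomp r (d1 d2 : pmap r) : pmap r :=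
  [ffun x => obind d2 (d1 x)].

Definition pN r (d1 d2 : pmap r) : nat :=
  r - #|[pred x : 'I_r | (Some x \in codom d1) || (d2 x != None)]|.

Section Palg.
Variable (C : nzRingType) (r : nat) (z : C).

(* elements of P'_r(z): coefficient vectors on the basis of partial perms *)
Definition Pel := {ffun pperm r -> C}.

Definition padd (x y : Pel) : Pel := [ffun d => x d + y d].
Definition pscale (a : C) (x : Pel) : Pel := [ffun d => a * x d].

(* bilinear extension of d1 d2 = z^N (d1 o d2) *)
Definition pmul (x y : Pel) : Pel :=
  [ffun d => \sum_(d1 : pperm r) \sum_(d2 : pperm r |
       pcomp (val d1) (val d2) == val d)
       x d1 * y d2 * z ^+ pN (val d1) (val d2)].

Definition pbasis (f : pmap r) : Pel := [ffun d => if val d == f then 1 else 0].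

Definition pone : Pel := pbasis [ffun x => Some x].

(* s_i (1 <= i <= r-1), 0-based index i with i.+1 < r: swaps i and i+1 *)
Definition sgen (i : nat) : Pel :=
  pbasis [ffun x : 'I_r => if (x : nat) == i then insub i.+1
                          else if (x : nat) == i.+1 then insub i else Some x].

(* p_j (1 <= j <= r), 0-based index j < r: identity of {1..r} \ {j} *)
Definition pgen (j : nat) : Pel :=
  pbasis [ffun x : 'I_r => if (x : nat) == j then None else Some x].
End Palg.

(* The defining relations (a),(b),(c), for a multiplication [mul],
   unit [one], and scaling-by-z map [zsc]; 0-based indices:
   s i for i.+1 < r, p j for j < r. *)
Local Open Scope nat_scope.
Definition pres_rels (T : Type) (mul : T -> T -> T) (one : T) (zsc : T -> T)
  (r : nat) (s p : nat -> T) : Prop :=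
      (forall j, j < r -> mul (p j) (p j) = zsc (p j)) /\
      (forall i j, i < r -> j < r -> i != j -> mul (p i) (p j) = mul (p j) (p i)) /\
      (forall i, i.+1 < r -> mul (s i) (s i) = one) /\
      (forall i, i.+2 < r ->
         mul (mul (s i) (s i.+1)) (s i) = mul (mul (s i.+1) (s i)) (s i.+1)) /\
      (forall i j, i.+1 < r -> j.+1 < r -> (i.+1 < j)%N || (j.+1 < i)%N ->
         mul (s i) (s j) = mul (s j) (s i)) /\
      (forall i, i.+1 < r ->
         mul (s i) (mul (p i) (p i.+1)) = mul (p i) (p i.+1) /\
         mul (mul (p i) (p i.+1)) (s i) = mul (p i) (p i.+1)) /\
      (forall i, i.+1 < r -> mul (mul (s i) (p i)) (s i) = p i.+1) /\
      (forall i j, i.+1 < r -> j < r -> j != i -> j != i.+1 ->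
         mul (s i) (p j) = mul (p j) (s i)).

Local Open Scope ring_scope.
Definition palg_morph (C : nzRingType) (r : nat) (z : C) (A : algType C)
  (f : Pel C r -> A) : Prop :=
  [/\ forall a x y, f (padd (pscale a x) y) = a *: f x + f y,
      forall x y, f (pmul z x y) = f x * f y &
      f (pone C r) = 1].

(* Main.v *)
Require Import Defs.
From HB Require Import structures.
From mathcomp Require Import all_boot all_order all_algebra.
From mathcomp Require Import complex.
From mathcomp Require Import reals.
From mathcomp Require Import all_fingroup.
From mathcomp Require Import zify.
Set Implicit Arguments. Unset Strict Implicit. Unset Printing Implicit Defensive.
Import Order.TTheory GRing.Theory Num.Theory.

Section Cox.
Variables (T : Type) (mul : T -> T -> T) (one : T) (s : nat -> T) (n : nat).
Local Notation "x * y" := (mul x y).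
Hypotheses (mulA : associative mul) (mul1t : left_id one mul) (mult1 : right_id one mul).
Hypothesis ss : forall i, i.+1 < n -> s i * s i = one.
Hypothesis br : forall i, i.+2 < n -> s i * s i.+1 * s i = s i.+1 * s i * s i.+1.
Hypothesis cm : forall i j, i.+1 < n -> j.+1 < n -> (i.+1 < j) || (j.+1 < i) ->
  s i * s j = s j * s i.

Definition ev (w : seq nat) := foldr (fun i acc => s i * acc) one w.

Lemma ev_cat w1 w2 : ev (w1 ++ w2) = ev w1 * ev w2.
Proof. by elim: w1 => [|a w IH] /=; rewrite ?mul1t // IH mulA. Qed.

Lemma ev_rcons w i : ev (rcons w i) = ev w * s i.
Proof. by rewrite -cats1 ev_cat /= mult1. Qed.

Fixpoint cw j k := if k is k'.+1 then (j + k') :: cw j k' else [::].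

Lemma cwS j k : cw j k.+1 = rcons (cw j.+1 k) j.
Proof. elim: k => [|k IH] /=; first by rewrite addn0. by rewrite -IH addSnnS. Qed.

Lemma mem_cw m j k : (m \in cw j k) = (j <= m < j + k).
Proof.
elim: k => [|k IH] /=; first by rewrite in_nil addn0; lia.
rewrite inE IH; lia.
Qed.

Lemma ev_comm w i : i.+1 < n ->
  (forall m, m \in w -> (m.+1 < n) && ((m.+1 < i) || (i.+1 < m))) ->
  ev w * s i = s i * ev w.
Proof.
move=> hi; elim: w => [|a w IH] hw /=; first by rewrite mul1t mult1.
rewrite -mulA IH; last by move=> m hm; apply: hw; rewrite inE hm orbT.
have /andP[ha hai] := hw a (mem_head _ _).
by rewrite !mulA cm // orbC.
Qed.

Lemma C1 i j k : i.+1 < j -> j + k < n -> ev (cw j k) * s i = s i * ev (cw j k).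
Proof.
move=> h1 h2; apply: ev_comm; first lia.
by move=> m; rewrite mem_cw => hm; apply/andP; split; lia.
Qed.

Lemma C2 j k : ev (cw j k.+1) = ev (cw j.+1 k) * s j.
Proof. by rewrite cwS ev_rcons. Qed.

Lemma C3 j k : j.+1 < n -> ev (cw j k.+1) * s j = ev (cw j.+1 k).
Proof. by move=> h; rewrite C2 -mulA ss // mult1. Qed.

Lemma C4 i j k : j < i -> i < j + k -> j + k < n ->
  ev (cw j k) * s i = s i.-1 * ev (cw j k).
Proof.
elim: k => [|k IH] h1 h2 h3; first lia.
have [ei|ne] := eqVneq i (j + k).
  case: k IH h2 h3 ei => [|k] _ h2 h3 ei; first lia.
  have e : i.-1 = j + k by lia.
  rewrite /= -e -ei.
  have hc : ev (cw j k) * s i = s i * ev (cw j k).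
    apply: ev_comm; first lia.
    by move=> m; rewrite mem_cw => hm; apply/andP; split; lia.
  rewrite -!mulA hc !mulA.
  have := br (i:=i.-1); rewrite (_ : i.-1.+1 = i); last lia.
  by move=> ->; [rewrite -!mulA | lia].
rewrite /= -mulA IH; try lia.
by rewrite !mulA cm //; lia.
Qed.
End Cox.

Ltac natcase := repeat match goal with
 | |- context [?a == ?b] =>
     lazymatch a with context [if _ then _ else _] => fail | _ =>
     lazymatch b with context [if _ then _ else _] => fail | _ =>
     case: (a =P b) => /= ? end end
 end; lia.
Section PermSec.
Variable r' : nat.
Local Notation r := r'.+1.
Local Notation PT := {perm 'I_r}.
Local Open Scope group_scope.

Definition tp (i : nat) : PT := if (i.+1 < r)%N then tperm (inord i) (inord i.+1) else 1.

Lemma tpE i x : (i.+1 < r)%N ->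
  nat_of_ord (tp i x) = if nat_of_ord x == i then i.+1 else if nat_of_ord x == i.+1 then i else nat_of_ord x.
Proof.
move=> h; rewrite /tp h.
have hi : (i < r)%N by lia.
have e1 : (x == inord i) = (nat_of_ord x == i) by rewrite -(inj_eq val_inj) /= inordK.
have e2 : (x == inord i.+1) = (nat_of_ord x == i.+1) by rewrite -(inj_eq val_inj) /= inordK.
case: tpermP => [->|->|h1 h2]; rewrite ?(inordK hi) ?(inordK h) ?eqxx; [natcase|natcase|].
move/eqP: h1; move/eqP: h2; rewrite e1 e2 => /negPf -> /negPf -> //.
Qed.

Lemma tp_out i : ~~ (i.+1 < r)%N -> tp i = 1.
Proof. by rewrite /tp => /negPf ->. Qed.


Lemma tp_ss i : (i.+1 < r)%N -> tp i * tp i = 1.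
Proof.
move=> h; apply/permP => x; apply/val_inj; rewrite /=; rewrite permM perm1 !tpE //. natcase.
Qed.

Lemma tp_br i : (i.+2 < r)%N -> tp i * tp i.+1 * tp i = tp i.+1 * tp i * tp i.+1.
Proof.
move=> h; apply/permP => x; apply/val_inj; rewrite /=; rewrite !permM !tpE //; try lia. natcase.
Qed.

Lemma tp_cm i j : (i.+1 < r)%N -> (j.+1 < r)%N -> (i.+1 < j)%N || (j.+1 < i)%N ->
  tp i * tp j = tp j * tp i.
Proof.
move=> h1 h2 h3; apply/permP => x; apply/val_inj; rewrite /=; rewrite !permM !tpE //. natcase.
Qed.

Definition evp := ev mulg 1 tp.

Fixpoint W n (p : PT) : seq nat :=
  if n is n'.+1 then
    let j := nat_of_ord (p (inord n')) in
    W n' (p * (evp (cw j (n' - j)))^-1) ++ cw j (n' - j)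
  else [::].

Lemma evp_fix w x : (forall m, m \in w -> m.+1 < nat_of_ord x)%N -> evp w x = x.
Proof.
elim: w => [|a w IH] hw /=; first by rewrite perm1.
rewrite permM.
have ha := hw a (mem_head _ _).
have hx : (a.+1 < r)%N by have := ltn_ord x; lia.
have -> : tp a x = x by apply/val_inj; rewrite /= tpE //; natcase.
by rewrite IH // => m hm; apply: hw; rewrite inE hm orbT.
Qed.

Lemma evp_cw_top j k : (j + k < r)%N -> nat_of_ord (evp (cw j k) (inord (j + k))) = j.
Proof.
elim: k => [|k IH] h /=; first by rewrite perm1 inordK addn0 //; lia.
rewrite permM.
have h1 : (j + k).+1 < r by lia.
have -> : tp (j + k) (inord (j + k.+1)) = inord (j + k).
  by apply/val_inj; rewrite /=; rewrite tpE // !inordK //; try lia; natcase.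
by rewrite IH //; lia.
Qed.

Definition fixge n (p : PT) := forall x : 'I_r, (n <= nat_of_ord x)%N -> p x = x.

Lemma fixge_lt n (p : PT) x : (n <= r)%N -> fixge n p -> (nat_of_ord x < n)%N -> (nat_of_ord (p x) < n)%N.
Proof.
move=> hn hp hx; rewrite ltnNge; apply/negP => h.
have e := perm_inj (hp _ h).
by move: h; rewrite e; lia.
Qed.


Lemma evp_cat w1 w2 : evp (w1 ++ w2) = evp w1 * evp w2.
Proof. exact: (ev_cat tp (@mulgA _) (@mul1g _)). Qed.

Definition cc (n' : nat) (p : PT) := evp (cw (p (inord n')) (n' - p (inord n'))).

Lemma cc_top n' (p : PT) : (n' < r)%N -> (nat_of_ord (p (inord n')) <= n')%N ->
  cc n' p (inord n') = p (inord n').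
Proof.
move=> h1 h2; apply/val_inj; rewrite /= /cc.
have e : (nat_of_ord (p (inord n')) + (n' - p (inord n')) = n')%N by lia.
have := evp_cw_top (j := p (inord n')) (k := n' - p (inord n')); rewrite e => -> //.
Qed.

Lemma cc_fix n' (p : PT) x : (n' < nat_of_ord x)%N -> cc n' p x = x.
Proof.
move=> h; apply: evp_fix => m; rewrite mem_cw; lia.
Qed.

Lemma fixge_step n' (p : PT) : (n' < r)%N -> fixge n'.+1 p -> fixge n' (p * (cc n' p)^-1).
Proof.
move=> hr hp x hx; rewrite permM.
have hj : (nat_of_ord (p (inord n')) < n'.+1)%N.
  by apply: fixge_lt => //; rewrite inordK.
case: (ltngtP n' x) => [hlt|hlt|he].
- by rewrite hp // -{1}(cc_fix p hlt) permK.
- lia.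
have ex : x = inord n' by apply/val_inj; rewrite /= inordK //; lia.
rewrite ex -{1}cc_top ?permK //; lia.
Qed.

Lemma fixge0 (p : PT) : fixge 0 p -> p = 1.
Proof. by move=> h; apply/permP => x; rewrite perm1 h. Qed.

Lemma W_perm n (p : PT) : (n <= r)%N -> fixge n p -> evp (W n p) = p.
Proof.
elim: n p => [|n IH] p hn hp /=; first by rewrite (fixge0 hp).
rewrite evp_cat.
rewrite IH; [|lia|exact: fixge_step].
by rewrite -/(cc n p) mulgKV.
Qed.

Lemma fixge_r (p : PT) : fixge r p.
Proof. by move=> x hx; have := ltn_ord x; lia. Qed.

Lemma perm_ind (P : PT -> Prop) : P 1 -> (forall p i, (i.+1 < r)%N -> P p -> P (p * tp i)) ->
  forall p, P p.
Proof.
move=> h1 hs p; rewrite -(W_perm (leqnn r) (fixge_r p)).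
have : forall w p0, P p0 -> P (p0 * evp w).
  elim=> [|a w IH] p0 hp0 /=; first by rewrite mulg1.
  rewrite mulgA; apply: IH.
  case: (ltnP a.+1 r) => ha; first exact: hs.
  by rewrite tp_out -?ltnNge // mulg1.
by move=> /(_ (W r p) 1 h1); rewrite mul1g.
Qed.

End PermSec.

Section PermGroup.
Variable r' : nat.
Local Notation r := r'.+1.
Local Notation PT := {perm 'I_r}.
Local Open Scope group_scope.

Lemma swap_inv (g c t d : PT) : c * t = d * c -> g * t * c^-1 = g * c^-1 * d.
Proof.
move=> e; rewrite -!mulgA; congr (g * _).
by rewrite -(mulKg c t) e -!mulgA mulgV mulg1.
Qed.

Lemma pC1 i j k : (i.+1 < j)%N -> (j + k < r)%N ->
  evp r' (cw j k) * tp r' i = tp r' i * evp r' (cw j k).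
Proof. exact: (C1 (@mulgA _) (@mul1g _) (@mulg1 _) (@tp_cm r')). Qed.

Lemma pC2 j k : evp r' (cw j k.+1) = evp r' (cw j.+1 k) * tp r' j.
Proof. exact: (C2 _ (@mulgA _) (@mul1g _) (@mulg1 _)). Qed.

Lemma pC4 i j k : (j < i)%N -> (i < j + k)%N -> (j + k < r)%N ->
  evp r' (cw j k) * tp r' i = tp r' i.-1 * evp r' (cw j k).
Proof. exact: (C4 (@mulgA _) (@mul1g _) (@mulg1 _) (@tp_br r') (@tp_cm r')). Qed.

Lemma W_S n' (q : PT) j : nat_of_ord (q (inord n')) = j ->
  W n'.+1 q = W n' (q * (evp r' (cw j (n' - j)))^-1) ++ cw j (n' - j).
Proof. by move=> e; rewrite /= e. Qed.

End PermGroup.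

Section CoxA.
Variable r' : nat.
Local Notation r := r'.+1.
Local Notation PT := {perm 'I_r}.
Variables (A : nzRingType) (s : nat -> A).
Local Open Scope ring_scope.
Hypothesis ss : forall i, (i.+1 < r)%N -> s i * s i = 1.
Hypothesis br : forall i, (i.+2 < r)%N -> s i * s i.+1 * s i = s i.+1 * s i * s i.+1.
Hypothesis cm : forall i j, (i.+1 < r)%N -> (j.+1 < r)%N -> (i.+1 < j)%N || (j.+1 < i)%N ->
  s i * s j = s j * s i.

Definition evA := ev *%R 1 s.

Lemma evA_cat w1 w2 : evA (w1 ++ w2) = evA w1 * evA w2.
Proof. exact: (ev_cat s (@mulrA _) (@mul1r _)). Qed.

Lemma aC1 i j k : (i.+1 < j)%N -> (j + k < r)%N ->
  evA (cw j k) * s i = s i * evA (cw j k).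
Proof. exact: (C1 (@mulrA _) (@mul1r _) (@mulr1 _) cm). Qed.

Lemma aC2 j k : evA (cw j k.+1) = evA (cw j.+1 k) * s j.
Proof. exact: (C2 _ (@mulrA _) (@mul1r _) (@mulr1 _)). Qed.

Lemma aC3 j k : (j.+1 < r)%N -> evA (cw j k.+1) * s j = evA (cw j.+1 k).
Proof. exact: (C3 (@mulrA _) (@mul1r _) (@mulr1 _) ss). Qed.

Lemma aC4 i j k : (j < i)%N -> (i < j + k)%N -> (j + k < r)%N ->
  evA (cw j k) * s i = s i.-1 * evA (cw j k).
Proof. exact: (C4 (@mulrA _) (@mul1r _) (@mulr1 _) br cm). Qed.

Lemma key n (p : PT) i : (n <= r)%N -> fixge n p -> (i.+1 < n)%N ->
  evA (W n (p * tp r' i)%g) = evA (W n p) * s i.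
Proof.
elim: n p i => [|n' IH] p i hn hp hi; first lia.
set j := nat_of_ord (p (inord n')).
have hj : (j < n'.+1)%N by apply: fixge_lt => //; rewrite inordK.
have hir : (i.+1 < r)%N by lia.
have ej' : nat_of_ord ((p * tp r' i)%g (inord n')) =
    if j == i then i.+1 else if j == i.+1 then i else j by rewrite permM tpE.
set c := evp r' (cw j (n' - j)).
have hp' := fixge_step (leq_trans (ltnSn n') hn) hp.
rewrite /cc -/j -/c in hp'.
rewrite (W_S (erefl j)) -/c evA_cat.
have [hlt|hge] := ltnP i.+1 j.
- have e : (if j == i then i.+1 else if j == i.+1 then i else j) = j by natcase.
  rewrite e in ej'; rewrite (W_S ej') -/c evA_cat.
  have hc : (c * tp r' i = tp r' i * c)%g by apply: pC1; lia.
  rewrite (swap_inv _ hc).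
  rewrite IH //; try lia.
  by rewrite -!mulrA aC1 //; lia.
have [e1|ne1] := eqVneq j i.+1.
- rewrite e1 eqxx (_ : (i.+1 == i) = false) in ej'; last lia.
  rewrite (W_S ej') evA_cat.
  have ek : (n' - i = (n' - i.+1).+1)%N by lia.
  rewrite ek pC2 aC2 -/c.
  rewrite -e1 -/c.
  by rewrite invMg mulgA mulgK mulrA.
have [e0|ne0] := eqVneq j i.
- rewrite e0 eqxx in ej'.
  rewrite (W_S ej') evA_cat.
  have ek : (n' - i = (n' - i.+1).+1)%N by lia.
  have hc : c = (evp r' (cw i.+1 (n' - i.+1)) * tp r' i)%g by rewrite /c e0 ek pC2.
  have hc' : evp r' (cw i.+1 (n' - i.+1)) = (c * tp r' i)%g by rewrite hc -mulgA tp_ss // mulg1.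
  rewrite hc' invMg mulgA mulgK -mulrA.
  by rewrite /c e0 ek -aC3 //; lia.
have hji : (j < i)%N by lia.
have e : (if j == i then i.+1 else if j == i.+1 then i else j) = j by natcase.
rewrite e in ej'; rewrite (W_S ej') -/c evA_cat.
have hc : (c * tp r' i = tp r' i.-1 * c)%g by apply: pC4; lia.
rewrite (swap_inv _ hc).
rewrite IH //; try lia.
by rewrite -!mulrA aC4 //; lia.
Qed.

Definition S (p : PT) := evA (W r p).

Lemma S_tp p i : (i.+1 < r)%N -> S (p * tp r' i)%g = S p * s i.
Proof. by move=> h; apply: key => //; apply: fixge_r. Qed.

Lemma W1 n : (n <= r)%N -> evA (W n (1%g : PT)) = 1.
Proof.
elim: n => [|n IH] hn //=.
rewrite perm1 inordK ?subnn /= ?invg1 ?mulg1 ?cats0 ?IH //; lia.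
Qed.

Lemma S1 : S 1%g = 1.
Proof. exact: W1. Qed.

Lemma S_mul p q : S (p * q)%g = S p * S q.
Proof.
elim/(@perm_ind r'): q => [|q i hi IH]; first by rewrite mulg1 S1 mulr1.
by rewrite mulgA !S_tp // IH mulrA.
Qed.

Lemma S_inv p : S p * S p^-1%g = 1.
Proof. by rewrite -S_mul mulgV S1. Qed.

Lemma S_invl p : S p^-1%g * S p = 1.
Proof. by rewrite -S_mul mulVg S1. Qed.

Lemma S_tp1 i : (i.+1 < r)%N -> S (tp r' i) = s i.
Proof. by move=> h; rewrite -(mul1g (tp r' i)) S_tp // S1 mul1r. Qed.
End CoxA.

Section PmapSec.
Variable r' : nat.
Local Notation r := r'.+1.
Local Notation PT := {perm 'I_r}.

Definition domP (m : Defs.pmap r) : {set 'I_r} := [set x | m x != None].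
Definition extb (m : Defs.pmap r) (q : PT) := [forall x, (m x != None) ==> (m x == Some (q x))].
Definition mX (X : {set 'I_r}) (q : PT) : Defs.pmap r :=
  [ffun x => if x \in X then Some (q x) else None].

Lemma pinjP (m : Defs.pmap r) : pinj m -> forall x y, m x != None -> m x = m y -> x = y.
Proof.
move=> /forallP h x y hx e; have /forallP/(_ y) := h x.
by rewrite hx e eqxx /= => /eqP.
Qed.

Lemma pinjI (m : Defs.pmap r) : (forall x y, m x != None -> m x = m y -> x = y) -> pinj m.
Proof.
move=> h; apply/forallP => x; apply/forallP => y; apply/implyP => hx; apply/implyP => /eqP e.
by apply/eqP; apply: h.
Qed.

Lemma extP (m : Defs.pmap r) (q : PT) : extb m q -> forall x, x \in domP m -> m x = Some (q x).
Proof. by move=> /forallP h x; rewrite inE => hx; have /implyP/(_ hx)/eqP := h x. Qed.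

Lemma ndomP (m : Defs.pmap r) x : x \notin domP m -> m x = None.
Proof. by rewrite inE negbK => /eqP. Qed.

Lemma mX_ext (m : Defs.pmap r) (q : PT) : extb m q -> m = mX (domP m) q.
Proof.
move=> h; apply/ffunP => x; rewrite ffunE.
case: ifP => hx; first exact: extP.
by apply: ndomP; rewrite hx.
Qed.

Lemma mX_inj X (q : PT) : pinj (mX X q).
Proof.
apply: pinjI => x y; rewrite !ffunE.
case: ifP => // hx; case: ifP => hy _ // [e]; exact: perm_inj e.
Qed.

Lemma mX_dom X (q : PT) : domP (mX X q) = X.
Proof. by apply/setP => x; rewrite inE ffunE; case: ifP. Qed.

Lemma mX_extb X (q : PT) : extb (mX X q) q.
Proof. by rewrite /extb; apply/forallP => x; rewrite /mX ffunE; case: ifP => /=; rewrite ?eqxx. Qed.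

Lemma extbI (m : Defs.pmap r) (q : PT) : (forall x, x \in domP m -> m x = Some (q x)) -> extb m q.
Proof.
move=> h; apply/forallP => x; apply/implyP => hx.
by rewrite h // inE.
Qed.

Lemma pinj_comp (a b : Defs.pmap r) : pinj a -> pinj b -> pinj (Defs.pcomp a b).
Proof.
move=> ha hb; apply: pinjI => x y; rewrite !ffunE.
case ex: (a x) => [u|] //=; case ey: (a y) => [v|] //= hu e; last by rewrite e in hu.
have uv : u = v by apply: (pinjP hb hu e).
by apply: (pinjP ha); rewrite ?ex ?ey ?uv.
Qed.

Lemma comp_dom (a b : Defs.pmap r) (q : PT) : extb a q ->
  domP (Defs.pcomp a b) = domP a :&: q @^-1: domP b.
Proof.
move=> h; apply/setP => x; rewrite !inE ffunE.
case: (boolP (x \in domP a)) => hx.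
  by rewrite (extP h hx).
by rewrite (ndomP hx).
Qed.

Lemma comp_ext (a b : Defs.pmap r) (q q' : PT) : extb a q -> extb b q' -> extb (Defs.pcomp a b) (q * q')%g.
Proof.
move=> ha hb; apply: extbI => x; rewrite (comp_dom _ ha) !inE => /andP[h1 h2].
by rewrite ffunE (extP ha) ?inE //= (extP hb) ?inE // permM.
Qed.

Lemma pN_card (a b : Defs.pmap r) (q : PT) : extb a q ->
  pN a b = #|~: domP a :&: ~: (q @^-1: domP b)|.
Proof.
move=> h; rewrite /pN.
set B := [set x | (q^-1)%g x \in domP a] :|: domP b.
have -> : #|[pred x : 'I_r | (Some x \in codom a) || (b x != None)]| = #|B|.
  apply: eq_card => x; rewrite /B !inE /=; congr (_ || _).
  apply/codomP/idP => [[y ey]|hx].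
    have hy : y \in domP a by rewrite inE -ey.
    by move: ey; rewrite (extP h hy) => -[->]; rewrite permK; rewrite inE in hy.
  by exists ((q^-1)%g x); rewrite (extP h (x := (q^-1)%g x)) ?inE // permKV.
rewrite (cardsCs B) card_ord.
have -> : (r - (r - #|~: B|) = #|~: B|)%N.
  have : (#|~: B| <= r)%N by rewrite -[X in (_ <= X)%N](card_ord r) max_card.
  lia.
rewrite -(card_preimset _ (@perm_inj _ q)); apply: eq_card => x.
by rewrite !inE permK negb_or.
Qed.

Lemma ext_exists (m : Defs.pmap r) : pinj m -> exists q, extb m q.
Proof.
move: {2}#|~: domP m| (leqnn #|~: domP m|) => n.
elim: n m => [|n IH] m hn hm.
  have hall : forall x, m x != None.
    move=> x; move: hn; rewrite leqn0 => /eqP/cards0_eq/setP/(_ x).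
    by rewrite !inE negbK => /negbT.
  pose f x := odflt x (m x).
  have ef x : m x = Some (f x) by rewrite /f; case: (m x) (hall x).
  have finj : injective f.
    by move=> x y e; apply: (pinjP hm (hall x)); rewrite !ef e.
  exists (perm finj); apply: extbI => x _; by rewrite permE ef.
have [hall|] := boolP [forall x, m x != None].
  apply: (IH m) => //.
  have -> : ~: domP m = set0 by apply/setP => x; rewrite !inE negbK (negPf (forallP hall x)).
  by rewrite cards0.
rewrite negb_forall => /existsP[x0]; rewrite negbK => /eqP hx0.
have [y0 hy0] : exists y0, forall x, m x != Some y0.
  case: (boolP [exists y, [forall x, m x != Some y]]) => [/existsP[y /forallP hy]|hno].
    by exists y.
  exfalso.
  have hex : forall y, exists x, m x == Some y.
    move=> y; move: hno; rewrite negb_exists => /forallP/(_ y).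
    by rewrite negb_forall => /existsP[x]; rewrite negbK => ?; exists x.
  pose h y := odflt x0 [pick x | m x == Some y].
  have eh y : m (h y) = Some y.
    rewrite /h; case: pickP => [x /eqP //|hn0].
    by have [x hx] := hex y; move: (hn0 x); rewrite hx.
  have hinj : injective h.
    by move=> u v e; have := eh u; rewrite e eh => -[].
  have [g hg1 hg2] := injF_bij hinj.
  by have := eh (g x0); rewrite hg2 hx0.
pose m' : Defs.pmap r := [ffun x => if x == x0 then Some y0 else m x].
have hm' : pinj m'.
  apply: pinjI => x y; rewrite !ffunE.
  case: (x =P x0) => [->|hx]; case: (y =P x0) => [->|hy] //.
  - by move=> _ e; have := hy0 y; rewrite -e eqxx.
  - by move=> _ e; have := hy0 x; rewrite e eqxx.
  - by apply: (pinjP hm).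
have hdom : ~: domP m' = (~: domP m) :\ x0.
  apply/setP => x; rewrite !inE ffunE.
  by case: (x =P x0) => [->|] //=; rewrite hx0.
have [q hq] : exists q, extb m' q.
  apply: (IH m') => //.
  by move: hn; rewrite hdom (cardsD1 x0 (~: domP m)) !inE hx0 eqxx /= add1n ltnS.
exists q; apply: extbI => x hx.
have hne : x != x0 by apply: contraTneq hx => ->; rewrite inE hx0.
have := extP hq (x := x); rewrite ffunE (negPf hne) => -> //.
by rewrite inE ffunE (negPf hne); move: hx; rewrite inE.
Qed.

End PmapSec.

Local Open Scope ring_scope.

Section ProdComm.
Variable A : nzRingType.

Lemma prod_perm_comm (I : eqType) (l1 l2 : seq I) (F : I -> A) :
  (forall i j, GRing.comm (F i) (F j)) -> perm_eq l1 l2 ->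
  \prod_(i <- l1) F i = \prod_(i <- l2) F i.
Proof.
move=> hc; elim: l1 l2 => [|a l1 IH] l2 hp.
  by move: hp; rewrite perm_sym => /perm_nilP ->.
have ha : a \in l2 by rewrite -(perm_mem hp) mem_head.
move: hp; case/splitPr: ha => s1 s2 hp.
rewrite big_cons big_cat big_cons /= mulrA.
have -> : \prod_(i <- s1) F i * F a = F a * \prod_(i <- s1) F i.
  by apply/esym/commr_prod => i _; apply: hc.
rewrite -mulrA -big_cat; congr (_ * _); apply: IH.
by rewrite -(perm_cons a); apply: (perm_trans hp); rewrite (perm_catCA s1 [:: a] s2).
Qed.

Lemma prod_mul_comm (I : Type) (l : seq I) (F G : I -> A) :
  (forall i j, GRing.comm (F i) (G j)) ->
  \prod_(i <- l) F i * \prod_(i <- l) G i = \prod_(i <- l) (F i * G i).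
Proof.
move=> hc; elim: l => [|a l IH]; first by rewrite !big_nil mulr1.
rewrite !big_cons -IH -!mulrA; congr (_ * _); rewrite !mulrA; congr (_ * _).
by apply/esym/commr_prod => i _; apply/commr_sym/hc.
Qed.

Lemma prod_push (I : Type) (l : seq I) (F G : I -> A) (x : A) :
  (forall i, x * F i = G i * x) ->
  x * \prod_(i <- l) F i = \prod_(i <- l) G i * x.
Proof.
move=> h; elim: l => [|a l IH]; first by rewrite !big_nil mulr1 mul1r.
by rewrite !big_cons mulrA h -mulrA IH mulrA.
Qed.
End ProdComm.

Local Open Scope ring_scope.

Section AlgSec.
Variable r' : nat.
Local Notation r := r'.+1.
Local Notation PT := {perm 'I_r}.
Variables (K : comNzRingType) (z : K) (A : algType K) (s p : nat -> A).
Hypothesis pp : forall j, (j < r)%N -> p j * p j = z *: p j.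
Hypothesis pc : forall i j, (i < r)%N -> (j < r)%N -> i != j -> p i * p j = p j * p i.
Hypothesis ss : forall i, (i.+1 < r)%N -> s i * s i = 1.
Hypothesis br : forall i, (i.+2 < r)%N -> s i * s i.+1 * s i = s i.+1 * s i * s i.+1.
Hypothesis cm : forall i j, (i.+1 < r)%N -> (j.+1 < r)%N -> (i.+1 < j)%N || (j.+1 < i)%N ->
  s i * s j = s j * s i.
Hypothesis c1 : forall i, (i.+1 < r)%N ->
  s i * (p i * p i.+1) = p i * p i.+1 /\ p i * p i.+1 * s i = p i * p i.+1.
Hypothesis c2 : forall i, (i.+1 < r)%N -> s i * p i * s i = p i.+1.
Hypothesis c3 : forall i j, (i.+1 < r)%N -> (j < r)%N -> j != i -> j != i.+1 ->
  s i * p j = p j * s i.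

Local Notation S := (@S r' A s).
Lemma Stp q i : (i.+1 < r)%N -> S (q * tp r' i)%g = S q * s i.
Proof. exact: (S_tp ss br cm q). Qed.
Lemma Smul q q' : S (q * q')%g = S q * S q'.
Proof. exact: (S_mul ss br cm q q'). Qed.
Lemma Sone : S 1%g = 1.
Proof. exact: S1. Qed.
Definition P (x : 'I_r) := p x.

Lemma P_s x i : (i.+1 < r)%N -> P x * s i = s i * P (tp r' i x).
Proof.
move=> h; rewrite /P tpE //.
case: eqP => [e|ne]; first by rewrite e -c2 // !mulrA ss // mul1r.
case: eqP => [e|ne2]; first by rewrite e -c2 // -!mulrA ss // mulr1.
by rewrite c3 //; apply/eqP.
Qed.

Lemma P_S x (q : PT) : P x * S q = S q * P (q x).
Proof.
elim/(@perm_ind r'): q x => [|q i hi IH] x; first by rewrite Sone mul1r mulr1 perm1.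
by rewrite Stp // mulrA IH -[in LHS]mulrA P_s // mulrA permM.
Qed.

Lemma S_P (q : PT) x : S q * P x = P ((q^-1)%g x) * S q.
Proof. by rewrite P_S permKV. Qed.

Definition ef (X : {set 'I_r}) (j : 'I_r) := if j \in X then 1 else P j.
Definition E (X : {set 'I_r}) := \prod_(j : 'I_r) ef X j.

Lemma ef_comm X Y i j : GRing.comm (ef X i) (ef Y j).
Proof.
rewrite /ef /GRing.comm; case: (i \in X); case: (j \in Y); rewrite ?mul1r ?mulr1 //.
have [->//|ne] := eqVneq i j.
by rewrite /P pc //; apply: contra ne => /eqP e; apply/eqP/val_inj.
Qed.

Lemma ET : E setT = 1.
Proof. by apply: big1 => j _; rewrite /ef inE. Qed.

Lemma EC1 j : E [set~ j] = P j.
Proof.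
rewrite /E (eq_bigr (fun i => if i == j then P i else 1)); last first.
  by move=> i _; rewrite /ef in_setC1 if_neg.
by rewrite -big_mkcond big_pred1_eq.
Qed.

Lemma EE X Y : E X * E Y = z ^+ #|~: X :&: ~: Y| *: E (X :&: Y).
Proof.
rewrite /E prod_mul_comm; last by move=> i j; apply: ef_comm.
rewrite (eq_bigr (fun j => (if j \in ~: X :&: ~: Y then z else 1) *: ef (X :&: Y) j)); last first.
  move=> j _; rewrite /ef !inE.
  case: (j \in X); case: (j \in Y) => /=; rewrite ?mulr1 ?mul1r ?scale1r //.
  by rewrite /P pp.
rewrite scaler_prod; congr (_ *: _).
by rewrite -big_mkcond prodr_const.
Qed.

Lemma SE (q : PT) Y : S q * E Y = E (q @^-1: Y) * S q.
Proof.
have h : forall k, S q * ef Y k = (if k \in Y then 1 else P ((q^-1)%g k)) * S q.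
  by move=> k; rewrite /ef; case: (k \in Y); rewrite ?mul1r ?mulr1 ?S_P.
rewrite /E (prod_push _ h).
congr (_ * _).
rewrite (eq_bigr (fun k => ef (q @^-1: Y) ((q^-1)%g k))); last first.
  by move=> k _; rewrite /ef inE permKV.
rewrite -(big_map (fun k => (q^-1)%g k) xpredT).
apply: prod_perm_comm; first by move=> i j; apply: ef_comm.
apply: uniq_perm; first by rewrite map_inj_uniq ?index_enum_uniq //; apply: perm_inj.
  exact: index_enum_uniq.
move=> x; rewrite mem_index_enum; apply/mapP; exists (q x); first exact: mem_index_enum.
by rewrite permK.
Qed.


Lemma Eadd (x : 'I_r) (X : {set 'I_r}) : x \notin X -> E (x |: X) * P x = E X.
Proof.
move=> hx; rewrite -EC1 EE.
have -> : ~: (x |: X) :&: ~: [set~ x] = set0.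
  by apply/setP => y; rewrite !inE; case: (y =P x) => [->|]; rewrite ?eqxx //= andbF.
have -> : (x |: X) :&: [set~ x] = X.
  apply/setP => y; rewrite !inE; case: (y =P x) => [->|] //=.
    by rewrite (negPf hx).
  by rewrite andbT.
by rewrite cards0 expr0 scale1r.
Qed.

Lemma S_inv' q : S q * S (q^-1)%g = 1.
Proof. by rewrite -Smul mulgV Sone. Qed.
Lemma S_invl' q : S (q^-1)%g * S q = 1.
Proof. by rewrite -Smul mulVg Sone. Qed.

Lemma conj_mul (q : PT) (u v : A) :
  (S (q^-1)%g * u * S q) * (S (q^-1)%g * v * S q) = S (q^-1)%g * (u * v) * S q.
Proof.
rewrite !mulrA; congr (_ * _ * _); by rewrite -mulrA S_inv' mulr1.
Qed.

Lemma PPt a b : a != b -> P a * P b * S (tperm a b) = P a * P b.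
Proof.
move=> ne.
have hr : (1 < r)%N.
  rewrite ltnNge; apply/negP => h; move/eqP: ne; apply; apply: ord_inj.
  by have := ltn_ord a; have := ltn_ord b; lia.
pose o0 : 'I_r := inord 0; pose o1 : 'I_r := inord 1.
have o01 : o0 != o1 by apply/eqP => /(congr1 val); rewrite /= !inordK //; lia.
pose c := tperm o0 a o1.
have [q hq0 hq1] : exists2 q : PT, q o0 = a & q o1 = b.
exists (tperm o0 a * tperm c b)%g; last by rewrite permM -/c tpermL.
  rewrite permM tpermL; case: tpermP => // e.
  - by exfalso; move/eqP: o01; apply; apply: (@perm_inj _ (tperm o0 a)); rewrite tpermL {1}e.
  - by rewrite e eqxx in ne.
have ht : tperm a b = (q^-1 * tp r' 0 * q)%g.
  by rewrite -mulgA -conjgE /tp hr tpermJ -/o0 -/o1 hq0 hq1.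
have hP x : P (q x) = S (q^-1)%g * P x * S q.
  by rewrite -mulrA P_S mulrA S_invl' mul1r.
rewrite ht !Smul S_tp1 // -hq0 -hq1 !hP !conj_mul.
have -> : P o0 * P o1 * s 0 = P o0 * P o1.
  by rewrite /P !inordK; try lia; apply: (c1 hr).2.
by [].
Qed.


Lemma Et (X : {set 'I_r}) (a b : 'I_r) : a != b -> a \notin X -> b \notin X -> E X * S (tperm a b) = E X.
Proof.
move=> ne ha hb.
have hb' : a \notin b |: X by rewrite !inE negb_or ha ne.
rewrite -(Eadd hb) -(Eadd hb') -!mulrA; congr (_ * _); rewrite !mulrA.
exact: PPt.
Qed.

Lemma Efix (X : {set 'I_r}) (q : PT) : (forall x, x \in X -> q x = x) -> E X * S q = E X.
Proof.
move: {2}#|[set x | q x != x]| (leqnn #|[set x | q x != x]|) => n.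
elim: n q => [|n IH] q hn hX.
  have -> : q = 1%g.
    apply/permP => x; rewrite perm1; apply/eqP; apply: contraT => hx.
    by move: hn; rewrite leqn0 => /eqP/cards0_eq/setP/(_ x); rewrite !inE hx.
  by rewrite Sone mulr1.
have [hq1|[a ha]] : q = 1%g \/ exists a, q a != a.
  case: (boolP [exists a, q a != a]) => [/existsP[a ha]|h]; [right; by exists a|left].
  apply/permP => x; rewrite perm1; apply/eqP; apply: contraR h => hx.
  by apply/existsP; exists x.
  by rewrite hq1 Sone mulr1.
set b := q a.
have haX : a \notin X by apply: contra ha => /hX ->.
have hbX : b \notin X.
  apply/negP => /hX hb; have e : b = a := perm_inj hb.
  by move: ha; rewrite -/b e eqxx.
have hab : a != b by rewrite eq_sym.
set q' := (q * tperm a b)%g.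
have eq : q = (q' * tperm a b)%g by rewrite /q' -mulgA tperm2 mulg1.
have hsub : [set x | q' x != x] \proper [set x | q x != x].
  apply/properP; split.
    apply/subsetP => x; rewrite !inE /q' permM => h; apply: contra h => /eqP hx.
    rewrite hx; case: tpermP => // e.
      by move: ha; rewrite -e hx eqxx.
    have hb : q b = b by rewrite -e.
    have e2 : b = a := perm_inj hb.
    by rewrite e2 eqxx in hab.
  exists a; first by rewrite inE.
  by rewrite inE /q' permM -/b tpermR eqxx.
have hn' : (#|[set x | q' x != x]| <= n)%N.
  by have := proper_card hsub; lia.
rewrite eq Smul mulrA IH //; first exact: Et.
move=> x hx; rewrite /q' permM hX //; case: tpermP => // e.
- by move: haX; rewrite -e hx.
- by move: hbX; rewrite -e hx.
Qed.


Definition F (m : Defs.pmap r) :=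
  E (domP m) * (if [pick q | extb m q] is Some q then S q else 1).

Lemma F_ext (m : Defs.pmap r) (q : PT) : extb m q -> F m = E (domP m) * S q.
Proof.
move=> h; rewrite /F; case: pickP => [q0 h0|/(_ q)]; last by rewrite h.
rewrite -(mulgKV q0 q) Smul mulrA [in RHS]Efix // => x hx.
by rewrite permM; move: (extP h hx); rewrite (extP h0 hx) => -[<-]; rewrite permK.
Qed.

Lemma F_mX X q : F (mX X q) = E X * S q.
Proof. by rewrite (F_ext (mX_extb X q)) mX_dom. Qed.

Lemma FM (a b : Defs.pmap r) : pinj a -> pinj b ->
  F a * F b = z ^+ pN a b *: F (Defs.pcomp a b).
Proof.
move=> ha hb; have [q hq] := ext_exists ha; have [q' hq'] := ext_exists hb.
rewrite (F_ext hq) (F_ext hq') (F_ext (comp_ext hq hq')) (comp_dom _ hq) (pN_card _ hq).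
rewrite mulrA -(mulrA (E _)) SE mulrA EE -!scalerAl Smul mulrA.
by [].
Qed.

End AlgSec.

Local Open Scope ring_scope.

Ltac natcase2 := repeat match goal with
 | |- context [?a == ?b] =>
     lazymatch a with context [if _ then _ else _] => fail | _ =>
     lazymatch b with context [if _ then _ else _] => fail | _ =>
     case: (a =P b) => /= ? end end
 end; try done; lia.

Section PelSec.
Variable r' : nat.
Local Notation r := r'.+1.
Local Notation PT := {perm 'I_r}.
Variables (K : comNzRingType) (z : K).
Local Notation pb := (pbasis K).
Local Notation pmulz := (@pmul K r z).

Lemma pscale1 (x : Pel K r) : pscale 1 x = x.
Proof. by apply/ffunP => d; rewrite ffunE mul1r. Qed.

Lemma pmul_scalel c (x y : Pel K r) : pmulz (pscale c x) y = pscale c (pmulz x y).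
Proof.
apply/ffunP => d; rewrite !ffunE mulr_sumr; apply: eq_bigr => d1 _.
rewrite mulr_sumr; apply: eq_bigr => d2 _; by rewrite ffunE !mulrA.
Qed.

Lemma pmul_scaler c (x y : Pel K r) : pmulz x (pscale c y) = pscale c (pmulz x y).
Proof.
apply/ffunP => d; rewrite !ffunE mulr_sumr; apply: eq_bigr => d1 _.
rewrite mulr_sumr; apply: eq_bigr => d2 _; rewrite ffunE.
by rewrite mulrCA !mulrA [c * _]mulrC.
Qed.

Lemma pscaleA c c' (x : Pel K r) : pscale c (pscale c' x) = pscale (c * c') x.
Proof. by apply/ffunP => d; rewrite !ffunE mulrA. Qed.

Lemma BP (a b : Defs.pmap r) : pinj a -> pinj b ->
  pmulz (pb a) (pb b) = pscale (z ^+ pN a b) (pb (Defs.pcomp a b)).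
Proof.
move=> ha hb; apply/ffunP => d; rewrite !ffunE.
pose a' : pperm r := exist _ a ha; pose b' : pperm r := exist _ b hb.
rewrite (bigD1 a') //= [X in _ + X]big1 ?addr0; last first.
  move=> d1 hd1; apply: big1 => d2 _; rewrite ffunE.
  case: eqP => [e|_]; last by rewrite !mul0r.
  by exfalso; move/eqP: hd1; apply; apply: val_inj.
rewrite big_mkcond (bigD1 b') //= [X in _ + X]big1 ?addr0; last first.
  move=> d2 hd2; rewrite !ffunE /=; case: ifP => // _.
  case: (val d2 =P b) => [e|_]; last by rewrite mulr0 mul0r.
  by exfalso; move/eqP: hd2; apply; apply: val_inj.
rewrite !ffunE /= !eqxx !mul1r eq_sym.
by case: ifP; rewrite ?mulr1 ?mulr0.
Qed.

Lemma preim1 (Y : {set 'I_r}) : (1%g : PT) @^-1: Y = Y.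
Proof. by apply/setP => x; rewrite !inE perm1. Qed.

Lemma BPm (X Y : {set 'I_r}) (q q' : PT) :
  pmulz (pb (mX X q)) (pb (mX Y q')) =
  pscale (z ^+ #|~: X :&: ~: (q @^-1: Y)|) (pb (mX (X :&: q @^-1: Y) (q * q')%g)).
Proof.
rewrite BP ?mX_inj // (pN_card _ (mX_extb X q)) mX_dom mX_dom.
by rewrite (mX_ext (comp_ext (mX_extb X q) (mX_extb Y q'))) (comp_dom _ (mX_extb X q)) !mX_dom.
Qed.

Lemma BPT (Y : {set 'I_r}) (q q' : PT) :
  pmulz (pb (mX setT q)) (pb (mX Y q')) = pb (mX (q @^-1: Y) (q * q')%g).
Proof. by rewrite BPm setCT set0I cards0 expr0 pscale1 setTI. Qed.

Lemma BPT2 (X : {set 'I_r}) (q q' : PT) :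
  pmulz (pb (mX X q)) (pb (mX setT q')) = pb (mX X (q * q')%g).
Proof. by rewrite BPm preimsetT setCT setI0 cards0 expr0 pscale1 setIT. Qed.

Lemma mX_eq (X Y : {set 'I_r}) (q q' : PT) : X = Y -> {in X, q =1 q'} -> mX X q = mX Y q'.
Proof.
move=> <- h; apply/ffunP => x; rewrite !ffunE; case: ifP => // hx.
by rewrite h.
Qed.

Lemma eq_inord (y : 'I_r) j : (j < r)%N -> (y == inord j) = (nat_of_ord y == j).
Proof. by move=> h; rewrite -(inj_eq val_inj) /= inordK. Qed.

Lemma sgenE i : (i.+1 < r)%N -> sgen K r i = pb (mX setT (tp r' i)).
Proof.
move=> h; rewrite /sgen; congr (pb _); apply/ffunP => x; rewrite !ffunE inE.
have hi : (i < r)%N by lia.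
case: eqP => e1.
  rewrite insubT; congr Some; apply: ord_inj; rewrite /= tpE //; natcase2.
case: eqP => e2.
  rewrite insubT; congr Some; apply: ord_inj; rewrite /= tpE //; natcase2.
congr Some; apply: ord_inj; rewrite tpE //; natcase2.
Qed.

Lemma pgenE j : (j < r)%N -> pgen K r j = pb (mX [set~ inord j] 1%g).
Proof.
move=> h; rewrite /pgen; congr (pb _); apply/ffunP => x; rewrite !ffunE !inE eq_inord //.
by case: eqP; rewrite /= ?perm1.
Qed.

Lemma poneE : pone K r = pb (mX setT 1%g).
Proof. by rewrite /pone; congr (pb _); apply/ffunP => x; rewrite !ffunE inE perm1. Qed.


Lemma cardC1C1 (i j : 'I_r) : #|~: [set~ i] :&: ~: [set~ j]| = (i == j : nat).
Proof.
rewrite !setCK; case: eqP => [->|ne]; first by rewrite setIid cards1.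
have -> : [set i] :&: [set j] = set0.
  by apply/setP => x; rewrite !inE; case: eqP => // ->; case: eqP.
by rewrite cards0.
Qed.

Lemma tp_preim i (Y : {set 'I_r}) x : (tp r' i x \in Y) = (x \in tp r' i @^-1: Y).
Proof. by rewrite inE. Qed.

Lemma rel_a1 j : (j < r)%N -> pmulz (pgen K r j) (pgen K r j) = pscale z (pgen K r j).
Proof.
move=> h; rewrite pgenE // BPm preim1 cardC1C1 eqxx expr1 setIid mulg1 //.
Qed.

Lemma rel_a2 i j : (i < r)%N -> (j < r)%N -> i != j ->
  pmulz (pgen K r i) (pgen K r j) = pmulz (pgen K r j) (pgen K r i).
Proof.
move=> hi hj ne; rewrite !pgenE // !BPm !preim1 !mulg1.
by congr (pscale (z ^+ #|_|) (pb (mX _ _))); rewrite setIC.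
Qed.

Lemma rel_b1 i : (i.+1 < r)%N -> pmulz (sgen K r i) (sgen K r i) = pone K r.
Proof. by move=> h; rewrite sgenE // BPT preimsetT tp_ss // poneE. Qed.

Lemma rel_b2 i : (i.+2 < r)%N ->
  pmulz (pmulz (sgen K r i) (sgen K r i.+1)) (sgen K r i) =
  pmulz (pmulz (sgen K r i.+1) (sgen K r i)) (sgen K r i.+1).
Proof. move=> h; have h1 : (i.+1 < r)%N by lia. by rewrite !sgenE // !BPT !preimsetT !BPT !preimsetT tp_br. Qed.

Lemma rel_b3 i j : (i.+1 < r)%N -> (j.+1 < r)%N -> (i.+1 < j)%N || (j.+1 < i)%N ->
  pmulz (sgen K r i) (sgen K r j) = pmulz (sgen K r j) (sgen K r i).
Proof. by move=> hi hj hij; rewrite !sgenE // !BPT !preimsetT tp_cm. Qed.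

Lemma pp_basis i : (i.+1 < r)%N -> pmulz (pgen K r i) (pgen K r i.+1) =
  pb (mX ([set~ inord i] :&: [set~ inord i.+1]) 1%g).
Proof.
move=> h; rewrite !pgenE //; try lia.
rewrite BPm preim1 cardC1C1 mulg1.
have -> : (inord i == inord i.+1 :> 'I_r) = false by rewrite eq_inord ?inordK //; lia.
by rewrite expr0 pscale1.
Qed.

Lemma rel_c1 i : (i.+1 < r)%N ->
  pmulz (sgen K r i) (pmulz (pgen K r i) (pgen K r i.+1)) = pmulz (pgen K r i) (pgen K r i.+1) /\
  pmulz (pmulz (pgen K r i) (pgen K r i.+1)) (sgen K r i) = pmulz (pgen K r i) (pgen K r i.+1).
Proof.
move=> h; rewrite pp_basis // sgenE // BPT BPT2; split; congr (pb _); apply: mX_eq => //.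
- apply/setP => x; rewrite !inE !eq_inord ?tpE //; try lia; natcase2.
- move=> x; rewrite !inE !eq_inord //; try lia; move=> hx; apply: ord_inj.
  rewrite permM !perm1 !tpE // in hx *; move: hx; natcase2.
- move=> x; rewrite !inE !eq_inord //; try lia; move=> hx; apply: ord_inj.
  rewrite permM !perm1 !tpE //; move: hx; natcase2.
Qed.

Lemma rel_c2 i : (i.+1 < r)%N ->
  pmulz (pmulz (sgen K r i) (pgen K r i)) (sgen K r i) = pgen K r i.+1.
Proof.
move=> h; rewrite !pgenE ?sgenE //; try lia.
rewrite BPT BPT2 mulg1 tp_ss //; congr (pb _); apply: mX_eq => //.
apply/setP => x; rewrite !inE !eq_inord ?tpE //; try lia; natcase2.
Qed.

Lemma rel_c3 i j : (i.+1 < r)%N -> (j < r)%N -> j != i -> j != i.+1 ->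
  pmulz (sgen K r i) (pgen K r j) = pmulz (pgen K r j) (sgen K r i).
Proof.
move=> h hj n1 n2; rewrite !pgenE ?sgenE //.
rewrite BPT BPT2 mulg1 mul1g; congr (pb _); apply: mX_eq => //.
apply/setP => x; rewrite !inE !eq_inord ?tpE //; move: n1 n2; natcase2.
Qed.

Lemma rels_P : pres_rels (pmul z) (pone K r) (pscale z) r (sgen K r) (pgen K r).
Proof.
split; first exact: rel_a1.
split; first exact: rel_a2.
split; first exact: rel_b1.
split; first exact: rel_b2.
split; first exact: rel_b3.
split; first exact: rel_c1.
split; first exact: rel_c2.
exact: rel_c3.
Qed.

End PelSec.

Local Open Scope ring_scope.

Section Uniq.
Variable r' : nat.
Local Notation r := r'.+1.
Local Notation PT := {perm 'I_r}.
Variables (K : comNzRingType) (z : K) (A : algType K).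
Local Notation pb := (pbasis K).
Local Notation pmulz := (@pmul K r z).

Lemma lin_decomp (h : Pel K r -> A) :
  (forall a x y, h (padd (pscale a x) y) = a *: h x + h y) ->
  forall x, h x = \sum_(d : pperm r) x d *: h (pb (val d)).
Proof.
move=> hl x.
pose x0 : Pel K r := [ffun=> 0].
have h0 : h x0 = 0.
  have e : padd (pscale 1 x0) x0 = x0 by apply/ffunP => d; rewrite !ffunE mulr0 addr0.
  have := hl 1 x0 x0; rewrite e scale1r => e2.
  by apply: (addrI (h x0)); rewrite addr0 -e2.
pose xl (l : seq (pperm r)) : Pel K r := [ffun d => if d \in l then x d else 0].
have hxl : forall l, uniq l -> h (xl l) = \sum_(d <- l) x d *: h (pb (val d)).
  elim=> [|a l IH] /=.
    by move=> _; rewrite big_nil -h0; congr h; apply/ffunP => d; rewrite !ffunE.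
  move=> /andP[ha hu]; rewrite big_cons -IH //.
  have -> : xl (a :: l) = padd (pscale (x a) (pb (val a))) (xl l).
    apply/ffunP => d; rewrite !ffunE inE.
    case: (d =P a) => [->|ne] /=; first by rewrite eqxx mulr1 (negPf ha) addr0.
    rewrite (_ : (val d == val a) = false) ?mulr0 ?add0r //.
    by apply/negP => /eqP/val_inj.
  by rewrite hl.
rewrite -hxl ?index_enum_uniq //; congr h; apply/ffunP => d; rewrite ffunE.
by rewrite mem_index_enum.
Qed.

Lemma morph_ext (g1 g2 : Pel K r -> A) : palg_morph z g1 -> palg_morph z g2 ->
  (forall i, (i.+1 < r)%N -> g1 (sgen K r i) = g2 (sgen K r i)) ->
  (forall j, (j < r)%N -> g1 (pgen K r j) = g2 (pgen K r j)) ->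
  forall x, g1 x = g2 x.
Proof.
move=> [l1 m1 o1] [l2 m2 o2] hs hp.
have hm u v : g1 u = g2 u -> g1 v = g2 v -> g1 (pmulz u v) = g2 (pmulz u v).
  by move=> e1 e2; rewrite m1 m2 e1 e2.
have hperm : forall q : PT, g1 (pb (mX setT q)) = g2 (pb (mX setT q)).
  elim/(@perm_ind r') => [|q i hi IH]; first by rewrite -poneE o1 o2.
  have -> : pb (mX setT (q * tp r' i)%g) = pmulz (pb (mX setT q)) (sgen K r i).
    by rewrite sgenE // BPT preimsetT.
  by apply: hm => //; apply: hs.
have hset : forall X : {set 'I_r}, g1 (pb (mX X 1%g)) = g2 (pb (mX X 1%g)).
  move=> X; move: {2}#|~: X| (leqnn #|~: X|) => n.
  elim: n X => [|n IH] X hn.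
    have e : ~: X = set0 by apply: cards0_eq; lia.
    have -> : X = setT by rewrite -[X]setCK e setC0.
    exact: hperm.
  have [e|[j hj]] : ~: X = set0 \/ exists j, j \in ~: X.
    case: (set_0Vmem (~: X)) => [e|[j hj]]; [by left|right; by exists j].
    have -> : X = setT by rewrite -[X]setCK e setC0.
    exact: hperm.
  have -> : pb (mX X 1%g) = pmulz (pb (mX (j |: X) 1%g)) (pgen K r j).
    rewrite pgenE // inord_val BPm preim1 mulg1.
    have -> : ~: (j |: X) :&: ~: [set~ j] = set0.
      by apply/setP => y; rewrite !inE; case: (y =P j) => [->|]; rewrite ?eqxx /= ?andbF.
    have -> : (j |: X) :&: [set~ j] = X.
      apply/setP => y; rewrite !inE; case: (y =P j) => [->|] /=; last by rewrite andbT.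
      by move: hj; rewrite inE => /negPf ->.
    by rewrite cards0 expr0 pscale1.
  apply: hm; last by apply: hp.
  apply: IH; move: hn; rewrite (cardsD1 j (~: X)) hj.
  have -> : ~: (j |: X) = ~: X :\ j by apply/setP => y; rewrite !inE negb_or.
  by rewrite add1n ltnS.
have hbasis : forall m : Defs.pmap r, pinj m -> g1 (pb m) = g2 (pb m).
  move=> m hm'; have [q hq] := ext_exists hm'.
  rewrite (mX_ext hq) -(mul1g q) -(BPT2 z).
  by apply: hm; [apply: hset | apply: hperm].
move=> x; rewrite (lin_decomp l1) (lin_decomp l2); apply: eq_bigr => d _.
by rewrite hbasis //; case: d.
Qed.
End Uniq.

Local Open Scope ring_scope.

Section Exist.
Variable r' : nat.
Local Notation r := r'.+1.
Local Notation PT := {perm 'I_r}.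
Variables (K : comNzRingType) (z : K) (A : algType K) (s p : nat -> A).
Hypothesis pp : forall j, (j < r)%N -> p j * p j = z *: p j.
Hypothesis pc : forall i j, (i < r)%N -> (j < r)%N -> i != j -> p i * p j = p j * p i.
Hypothesis ss : forall i, (i.+1 < r)%N -> s i * s i = 1.
Hypothesis br : forall i, (i.+2 < r)%N -> s i * s i.+1 * s i = s i.+1 * s i * s i.+1.
Hypothesis cm : forall i j, (i.+1 < r)%N -> (j.+1 < r)%N -> (i.+1 < j)%N || (j.+1 < i)%N ->
  s i * s j = s j * s i.
Hypothesis c1 : forall i, (i.+1 < r)%N ->
  s i * (p i * p i.+1) = p i * p i.+1 /\ p i * p i.+1 * s i = p i * p i.+1.
Hypothesis c2 : forall i, (i.+1 < r)%N -> s i * p i * s i = p i.+1.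
Hypothesis c3 : forall i j, (i.+1 < r)%N -> (j < r)%N -> j != i -> j != i.+1 ->
  s i * p j = p j * s i.

Local Notation pb := (pbasis K).
Local Notation pmulz := (@pmul K r z).
Local Notation F := (@F r' K A s p).

Definition fmap (x : Pel K r) : A := \sum_(d : pperm r) x d *: F (val d).

Lemma f_lin a x y : fmap (padd (pscale a x) y) = a *: fmap x + fmap y.
Proof.
rewrite /fmap scaler_sumr -big_split; apply: eq_bigr => d _.
by rewrite !ffunE scalerDl scalerA.
Qed.

Lemma f_basis (m : Defs.pmap r) : pinj m -> fmap (pb m) = F m.
Proof.
move=> hm; rewrite /fmap (bigD1 (exist _ m hm)) //= [X in _ + X]big1 ?addr0.
  by rewrite ffunE /= eqxx scale1r.
move=> d hd; rewrite ffunE; case: eqP => [e|_]; last by rewrite scale0r.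
by exfalso; move/eqP: hd; apply; apply: val_inj.
Qed.

Lemma f_mul x y : fmap (pmulz x y) = fmap x * fmap y.
Proof.
rewrite /fmap mulr_suml.
transitivity (\sum_(d1 : pperm r) \sum_(d2 : pperm r)
   (x d1 * y d2 * z ^+ pN (val d1) (val d2)) *: F (Defs.pcomp (val d1) (val d2))).
  transitivity (\sum_(d : pperm r) \sum_(d1 : pperm r) \sum_(d2 : pperm r)
      (if Defs.pcomp (val d1) (val d2) == val d then
         (x d1 * y d2 * z ^+ pN (val d1) (val d2)) *: F (val d) else 0)).
    apply: eq_bigr => d _; rewrite ffunE scaler_suml; apply: eq_bigr => d1 _.
    rewrite scaler_suml big_mkcond; apply: eq_bigr => d2 _.
    by case: ifP; rewrite ?scale0r.
  rewrite exchange_big; apply: eq_bigr => d1 _; rewrite exchange_big; apply: eq_bigr => d2 _.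
  have hinj := pinj_comp (valP d1) (valP d2).
  rewrite (bigD1 (exist (fun f : Defs.pmap r => is_true (pinj f)) _ hinj : pperm r)) //= eqxx [X in _ + X]big1 ?addr0 //.
  move=> d hd; case: eqP => // e; exfalso; move/eqP: hd; apply; apply: val_inj => /=.
  by rewrite e.
apply: eq_bigr => d1 _; rewrite mulr_sumr; apply: eq_bigr => d2 _.
rewrite -scalerAl -scalerAr scalerA (FM pp pc ss br cm c1 c2 c3 (valP d1) (valP d2)).
by rewrite scalerA.
Qed.

Lemma f_one : fmap (pone K r) = 1.
Proof.
rewrite poneE f_basis ?mX_inj // (F_mX pp pc ss br cm c1 c2 c3).
by rewrite ET Sone mulr1.
Qed.

Lemma f_s i : (i.+1 < r)%N -> fmap (sgen K r i) = s i.
Proof.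
move=> h; rewrite sgenE // f_basis ?mX_inj // (F_mX pp pc ss br cm c1 c2 c3).
by rewrite ET mul1r S_tp1.
Qed.

Lemma f_p j : (j < r)%N -> fmap (pgen K r j) = p j.
Proof.
move=> h; rewrite pgenE // f_basis ?mX_inj // (F_mX pp pc ss br cm c1 c2 c3).
by rewrite EC1 Sone mulr1 /P inordK.
Qed.

End Exist.

Local Open Scope ring_scope.

Theorem theorem8p6 (R : realType) (r : nat) (z : complex R) :
  (1 <= r)%N -> z != 0 ->
  (* the images of the generators satisfy the relations in P'_r(z) ... *)
  pres_rels (pmul z) (pone _ r) (pscale z) r (sgen _ r) (pgen _ r) /\
  (* ... and P'_r(z) with these elements is universal among them *)
  (forall (A : algType (complex R)) (s p : nat -> A),
     pres_rels (fun a b => a * b) 1 (fun a => z *: a) r s p ->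
     exists f : Pel (complex R) r -> A,
       [/\ palg_morph z f,
           (forall i, (i.+1 < r)%N -> f (sgen _ r i) = s i),
           (forall j, (j < r)%N -> f (pgen _ r j) = p j) &
           (forall g : Pel (complex R) r -> A, palg_morph z g ->
              (forall i, (i.+1 < r)%N -> g (sgen _ r i) = s i) ->
              (forall j, (j < r)%N -> g (pgen _ r j) = p j) ->
              forall x, g x = f x)]).
Proof.
move=> hr _; case: r hr => [//|r'] _.
split; first exact: rels_P.
move=> A s p [pp [pc [ss [br [cm [c1 [c2 c3]]]]]]].
have hm : palg_morph z (@fmap r' _ A s p).
  split; first exact: f_lin.
    by move=> x y; apply: (f_mul pp pc ss br cm c1 c2 c3).
  exact: (f_one pp pc ss br cm c1 c2 c3).
exists (@fmap r' _ A s p); split => //.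
- by move=> i hi; apply: (f_s pp pc ss br cm c1 c2 c3).
- by move=> j hj; apply: (f_p pp pc ss br cm c1 c2 c3).
move=> g hg hgs hgp; apply: (morph_ext hg hm).
  by move=> i hi; rewrite hgs // (f_s pp pc ss br cm c1 c2 c3).
by move=> j hj; rewrite hgp // (f_p pp pc ss br cm c1 c2 c3).
Qed.
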